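(* In the setting below, with $\mu=\alpha_1+\alpha_2+2\alpha_3+2\alpha_4+\alpha_5+\alpha_6$ and $\tau\mu=\alpha_1+\alpha_2+\alpha_3+2\alpha_4+2\alpha_5+\alpha_6$, the vector $$P=(-2\alpha_1-\alpha_3+\alpha_5+2\alpha_6)(-1)\otimes e^{\mu}+(2\alpha_1+\alpha_3-\alpha_5-2\alpha_6)(-1)\otimes e^{\tau\mu}+3\otimes e^{\mu+\alpha_1-\alpha_6}+3\otimes e^{\tau\mu-\alpha_1+\alpha_6}\in V^{\Lambda_0}$$ is a highest weight vector of type $Vir(\tfrac45,\tfrac75)\otimes W^{\Omega_4}$, i.e. it satisfies (HW1)–(HW5) with $h=7/5$ and $\omega_j=\omega_4$.
   Context: Setting. $Q$ is the $E_6$ root lattice with simple roots $\alpha_1,\dots,\alpha_6$ (Dynkin chain $\alpha_1-\alpha_3-\alpha_4-\alpha_5-\alpha_6$, $\alpha_2$ attached to $\alpha_4$), form from the Cartan matrix, fundamental weights $\lambda_i$, $P_{\rm wt}=\bigoplus\mathbb Z\lambda_i$, $\mathfrak h=\mathbb C\otimes P_{\rm wt}$. $\varepsilon$ is bimultiplicative on $P_{\rm wt}$ with $[\varepsilon(\lambda_i,\lambda_j)]$ rows $(1,1,1,1,1,1)$, $(-1,1,1,1,1,-1)$, $(-1,1,1,1,1,1)$, $(1,-1,1,1,1,1)$, $(1,1,1,1,1,-1)$, $(1,1,1,1,1,1)$. $V_{P_{\rm wt}}=S(\hat{\mathfrak h}^-)\otimes\mathbb C[P_{\rm wt}]$ with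 Heisenberg operators $h(n)$ ($[h(m),h'(n)]=m\langle h,h'\rangle\delta_{m+n,0}$, $h(n)1=0$ for $n>0$, $h(0)(u\otimes e^\beta)=\langle h,\beta\rangle u\otimes e^\beta$). For $\alpha\in Q$: $Y(1\otimes e^\alpha,z)=\exp(\sum_{k\ge1}\frac{\alpha(-k)}kz^k)\exp(-\sum_{k\ge1}\frac{\alpha(k)}kz^{-k})e_\alpha z^{\alpha(0)}=\sum_n\{1\otimes e^\alpha\}_nz^{-n-1}$, $e_\alpha(u\otimes e^\beta)=\varepsilon(\alpha,\beta)u\otimes e^{\alpha+\beta}$, $z^{\alpha(0)}(u\otimes e^\beta)=z^{\langle\alpha,\beta\rangle}u\otimes e^\beta$; $Y(h_1(-1)\cdots h_k(-1)\otimes e^\alpha,z)=\,:h_1(z)\cdots h_k(z)Y(1\otimes e^\alpha,z):$, $h(z)=\sum_nh(n)z^{-n-1}$. $V^{\Lambda_0}=S(\hat{\mathfrak h}^-)\otimes\mathbb C[Q]$. $\tau$: $\alpha_1\leftrightarrow\alpha_6$, $\alpha_3\leftrightarrow\alpha_5$; $\mathrm{Proj}(\nu)=(\nu+\tau\nu)/2$. $\theta=\alpha_1+2\alpha_2+2\alpha_3+3\alpha_4+2\alpha_5+\alpha_6$. Raising operators of $\tilde{\mathfrak a}$ ($F_4^{(1)}$): $\{\beta_1\}_0=\{1\otimes e^{\alpha_2}\}_0$, $\{\beta_2\}_0=\{1\otimes e^{\alpha_4}\}_0$, $\{\beta_3\}_0=\{1\otimes e^{\alpha_3}\}_0+\{1\otimes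 e^{\alpha_5}\}_0$, $\{\beta_4\}_0=\{1\otimes e^{\alpha_1}\}_0+\{1\otimes e^{\alpha_6}\}_0$, $\{1\otimes e^{-\theta}\}_1$. Coset conformal vector $\omega=\frac1{10}[(-\lambda_1+\lambda_6)(-1)^2+(\lambda_3-\lambda_5)(-1)^2+(\lambda_1-\lambda_3+\lambda_5-\lambda_6)(-1)^2]\otimes e^0+\frac15(-1\otimes e^{\pm\gamma_1}-1\otimes e^{\pm\gamma_2}+1\otimes e^{\pm\gamma_3})$, $\gamma_1=\alpha_1-\alpha_6$, $\gamma_2=\alpha_3-\alpha_5$, $\gamma_3=\gamma_1+\gamma_2$, $1\otimes e^{\pm\gamma}:=1\otimes e^\gamma+1\otimes e^{-\gamma}$; $L(n)=\{\omega\}_{n+1}$ (Virasoro, $c=4/5$, commuting with $\tilde{\mathfrak a}$). $\omega_4=\frac{\lambda_1+\lambda_6}2$, $\Omega_4$ the level one $F_4^{(1)}$ weight with finite part $\omega_4$, $W^{\Omega_4}$ its irreducible module. A nonzero $v$ is a highest weight vector of type $Vir(\frac45,h)\otimes W^{\Omega_j}$ if (HW1) $\{1\otimes e^{-\theta}\}_1v=0$; (HW2) $\{\beta_i\}_0v=0$, $i=1,\dots,4$; (HW3) $L(1)v=L(2)v=0$; (HW4) $L(0)v=hv$; (HW5) $v\in\bigoplus_kS(\hat{\mathfrak h}^-)\otimes e^{\nu_k}$ with $\mathrm{Proj}(\nu_k)=\omega_j$. (The lattice is written $P_{\rm wt}$ here to avoid a clash with the vector named $P$.) *)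

(* Defs.v *)
(* Concrete model of the lattice vertex operator (super)algebra
   V_{P_wt} = S(hhat^-) (x) C[P_wt] for E_6, sufficient to state Lemma 6.3.
   Everything is defined over an arbitrary field F (structure constants are
   rational); the theorem is stated for F = algC (the complex algebraic numbers,
   the library's model of C). *)
From HB Require Import structures.
From mathcomp Require Import all_boot all_order all_algebra.
From mathcomp Require Import algC.

Set Implicit Arguments. Unset Strict Implicit. Unset Printing Implicit Defensive.
Import Order.TTheory GRing.Theory Num.Theory.
Local Open Scope ring_scope.

(* Indices: the ordinal i : 'I_6 stands for alpha_(i+1) / lambda_(i+1).       *)
(* Bourbaki labelling: chain a1-a3-a4-a5-a6, a2 attached to a4.              *)

(* the six indices, listed explicitly (computable version of enum 'I_6) *)
Definition ords6 : seq 'I_6 :=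
  [:: @Ordinal 6 0 isT; @Ordinal 6 1 isT; @Ordinal 6 2 isT;
      @Ordinal 6 3 isT; @Ordinal 6 4 isT; @Ordinal 6 5 isT].
Definition sum6 (R : nmodType) (f : 'I_6 -> R) : R :=
  foldr (fun i acc => f i + acc) 0 ords6.

Definition e6edge (a b : nat) : bool :=
  let e x y := ((a == x) && (b == y)) || ((a == y) && (b == x)) in
  [|| e 0 2, e 2 3, e 3 4, e 4 5 | e 1 3]%N.

Definition cartanE6 (i j : 'I_6) : int :=
  if i == j then 2 else if e6edge i j then -1 else 0.

(* 3 * inverse Cartan matrix: 3 <lambda_i, lambda_j> ; equivalently lambda_i
   = sum_j (cinv3 i j / 3) alpha_j. *)
Definition cinv3_rows : seq (seq int) :=
  [:: [:: 4; 3; 5; 6; 4; 2];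
      [:: 3; 6; 6; 9; 6; 3];
      [:: 5; 6; 10; 12; 8; 4];
      [:: 6; 9; 12; 18; 12; 6];
      [:: 4; 6; 8; 12; 10; 5];
      [:: 2; 3; 4; 6; 5; 4]].
Definition cinv3 (i j : 'I_6) : int := nth 0 (nth [::] cinv3_rows i) j.

(* Elements of P_wt, in lambda-coordinates: the list [b_1;...;b_6] stands for
   sum_i b_i lambda_i  (only lists of length 6 ever occur). *)
Definition lat := seq int.
Definition latc (x : lat) (i : 'I_6) : int := nth 0 x i.
(* Elements of Q given by alpha-coordinates (int-valued functions). *)
Definition qcoord := 'I_6 -> int.
Definition mkq (l : seq int) : qcoord := fun i => nth 0 l i.
(* lambda-coordinates of sum_i a_i alpha_i *)
Definition latA (a : qcoord) : lat := [seq sum6 (fun i => a i * cartanE6 i j) | j <- ords6].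
Definition lat_add (x y : lat) : lat := [seq latc x i + latc y i | i <- ords6].
(* <alpha, beta> for alpha in Q (alpha-coords) and beta in P_wt (lambda-coords) *)
Definition pairQP (a : qcoord) (beta : lat) : int := sum6 (fun i => a i * latc beta i).

(* The 2-cocycle epsilon: bimultiplicative on P_wt with
   epsilon(lambda_i, lambda_j) = -1 exactly at these (i,j) (1-based):
   (2,1),(2,6),(3,1),(4,2),(5,6). *)
Definition epsneg (i j : 'I_6) : bool :=
  [|| ((i : nat) == 1) && ((j : nat) == 0), ((i : nat) == 1) && ((j : nat) == 5),
      ((i : nat) == 2) && ((j : nat) == 0), ((i : nat) == 3) && ((j : nat) == 1)
    | ((i : nat) == 4) && ((j : nat) == 5)]%N.
Definition eps (F : fieldType) (x y : lat) : F :=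
  if odd (absz (sum6 (fun i => sum6 (fun j => if epsneg i j then latc x i * latc y j else 0))))
  then -1 else 1.

(* h = C (x) P_wt, elements given by their alpha-coordinates. *)
Definition hvec (F : fieldType) := 'I_6 -> F.
Definition hroot (F : fieldType) (a : qcoord) : hvec F := fun i => (a i)%:~R.
(* sum_j c_j lambda_j, with integer c *)
Definition hlam (F : fieldType) (c : seq int) : hvec F :=
  fun i => sum6 (fun j => (nth 0 c j)%:~R * (cinv3 j i)%:~R / 3%:R).
Definition hopp (F : fieldType) (h : hvec F) : hvec F := fun i => - h i.

(* Basis of V_{P_wt}: a monomial alpha_{i1}(-n1)...alpha_{ik}(-nk) (x) e^beta, *)
(* n's >= 1, stored as the list [(i1,n1);...;(ik,nk)] (order irrelevant).    *)
Definition mono := seq ('I_6 * nat).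
Definition basis := (mono * lat)%type.
Definition vect (F : fieldType) := seq (F * basis).

Definition coef (F : fieldType) (v : vect F) (b : basis) : F :=
  foldr (fun t acc => (if perm_eq t.2.1 b.1 && (t.2.2 == b.2) then t.1 else 0) + acc) 0 v.
Definition vzero (F : fieldType) (v : vect F) : Prop := forall b, coef v b = 0.

Definition vbind (F : fieldType) (f : basis -> vect F) (v : vect F) : vect F :=
  flatten [seq [seq (t.1 * u.1, u.2) | u <- f t.2] | t <- v].
Definition vscale (F : fieldType) (c : F) (v : vect F) : vect F :=
  [seq (c * t.1, t.2) | t <- v].

Definition wt (b : basis) : nat := sumn (map snd b.1).

Definition pair_h_root (F : fieldType) (h : hvec F) (j : 'I_6) : F :=
  sum6 (fun i => h i * (cartanE6 i j)%:~R).
Definition pair_h_lat (F : fieldType) (h : hvec F) (beta : lat) : F :=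
  sum6 (fun i => h i * (latc beta i)%:~R).
Definition heis_cre (F : fieldType) (h : hvec F) (n : nat) (b : basis) : vect F :=
  [seq (h i, ((i, n) :: b.1, b.2)) | i <- ords6].
Definition heis_ann (F : fieldType) (h : hvec F) (n : nat) (b : basis) : vect F :=
  [seq (n%:R * pair_h_root h (nth (ord0, 0%N) b.1 k).1,
        (take k b.1 ++ drop k.+1 b.1, b.2))
  | k <- iota 0 (size b.1) & (nth (ord0, 0%N) b.1 k).2 == n].
Definition heis (F : fieldType) (h : hvec F) (n : int) (b : basis) : vect F :=
  match n with
  | Posz 0 => [:: (pair_h_lat h b.2, b)]
  | Posz k.+1 => heis_ann h k.+1 b
  | Negz k => heis_cre h k.+1 b      (* Negz k = -(k+1) *)
  end.

(* Formal Laurent series in z with coefficients in V, as lists of           *)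
(* (power of z, coefficient, basis element).                                 *)
Definition lser (F : fieldType) := seq (int * (F * basis)).
Definition vlift (F : fieldType) (p : int) (v : vect F) : lser F := [seq (p, t) | t <- v].
(* apply an operator-valued series termwise; f p b gives the series applied to
   basis element b sitting at power p (relative powers) *)
Definition sbind (F : fieldType) (f : int -> basis -> lser F) (s : lser F) : lser F :=
  flatten [seq [seq (t.1 + u.1, (t.2.1 * u.2.1, u.2.2)) | u <- f t.1 t.2.2] | t <- s].
Definition extract (F : fieldType) (N : int) (s : lser F) : vect F :=
  [seq t.2 | t <- s & t.1 == N].

Fixpoint comps_fuel (fuel n : nat) : seq (seq nat) :=
  if n is 0 then [:: [::]] else
  if fuel is f.+1 then flatten [seq [seq k :: s | s <- comps_fuel f (n - k)] | k <- iota 1 n]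
  else [::].
Definition comps (n : nat) := comps_fuel n n.

(* coefficient of w^j in exp(sum_{k>=1} c_k A_k w^k) = sum_r (1/r!) (sum_k ...)^r,
   applied to b *)
Definition expcoef (F : fieldType) (c : nat -> F) (A : nat -> basis -> vect F)
    (j : nat) (b : basis) : vect F :=
  flatten [seq vscale ((size s)`!%:R^-1 * foldr (fun k acc => c k * acc) 1 s)
                      (foldr (fun k v => vbind (A k) v) [:: (1, b)] s)
          | s <- comps j].

(* powers q >= 0 with p + q <= N (truncation: only powers <= N are kept;
   this is exact for the coefficient of z^N since the outer factors below only
   contain nonnegative powers of z) *)
Definition trunc_range (N p : int) : seq nat :=
  if p <= N then iota 0 (absz (N - p)).+1 else [::].

(* h^+(z) = sum_{n >= 0} h(n) z^{-n-1}   (finite on each vector) *)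
Definition hplus (F : fieldType) (h : hvec F) : int -> basis -> lser F :=
  fun _ b => flatten [seq vlift (- (n%:Z) - 1) (heis h n b) | n <- iota 0 (wt b).+1].
(* h^-(z) = sum_{n < 0} h(n) z^{-n-1} = sum_{q>=0} h(-q-1) z^q, truncated at N *)
Definition hminus (F : fieldType) (N : int) (h : hvec F) : int -> basis -> lser F :=
  fun p b => flatten [seq vlift q%:Z (heis h (Negz q) b) | q <- trunc_range N p].
Definition ealpha (F : fieldType) (a : qcoord) : int -> basis -> lser F :=
  fun _ b => [:: (pairQP a b.2, (eps F (latA a) b.2, (b.1, lat_add (latA a) b.2)))].
(* exp(- sum_{k>=1} alpha(k)/k z^{-k})  (finite on each vector) *)
Definition Eplus (F : fieldType) (a : qcoord) : int -> basis -> lser F :=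
  fun _ b => flatten [seq vlift (- (j%:Z))
                  (expcoef (fun k => - (k%:R)^-1) (fun k => heis (hroot F a) k%:Z) j b)
                | j <- iota 0 (wt b).+1].
(* exp(sum_{k>=1} alpha(-k)/k z^{k}), truncated at N *)
Definition Eminus (F : fieldType) (N : int) (a : qcoord) : int -> basis -> lser F :=
  fun p b => flatten [seq vlift j%:Z
                  (expcoef (fun k => (k%:R)^-1) (fun k => heis (hroot F a) (- (k%:Z))) j b)
                | j <- trunc_range N p].

(* :h_1(z)...h_k(z) Y(1 (x) e^alpha, z):  with
   Y(1 (x) e^alpha,z) = E^-(alpha,z) E^+(alpha,z) e_alpha z^{alpha(0)} and
   :h(z) X(z): = h^-(z) X(z) + X(z) h^+(z)  (recursively). *)
Fixpoint NO (F : fieldType) (N : int) (hs : seq (hvec F)) (a : qcoord) (s : lser F)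
  : lser F :=
  if hs is h :: hs' then
    sbind (hminus N h) (NO N hs' a s) ++ NO N hs' a (sbind (hplus h) s)
  else sbind (Eminus F N a) (sbind (Eplus F a) (sbind (ealpha F a) s)).

(* the mode {h_1(-1)...h_k(-1) (x) e^alpha}_m : coefficient of z^{-m-1} *)
Definition Ymode (F : fieldType) (hs : seq (hvec F)) (a : qcoord) (m : int) (v : vect F)
  : vect F :=
  extract (- m - 1) (NO (- m - 1) hs a (vlift 0 v)).

(* linear combinations of such vectors: (coefficient, [h_1;...;h_k], alpha) *)
Definition descr (F : fieldType) := (F * seq (hvec F) * qcoord)%type.
Definition Ymode_lin (F : fieldType) (w : seq (descr F)) (m : int) (v : vect F)
  : vect F :=
  flatten [seq vscale d.1.1 (Ymode d.1.2 d.2 m v) | d <- w].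

Definition theta : qcoord := mkq [:: 1; 2; 2; 3; 2; 1].
Definition qopp (a : qcoord) : qcoord := fun i => - a i.
Definition qalpha (i : nat) : qcoord := fun j => if (j : nat) == i then 1 else 0.

(* raising operators of F_4^(1) *)
Definition raise1 (F : fieldType) (v : vect F) : vect F := Ymode [::] (qalpha 1) 0 v.
Definition raise2 (F : fieldType) (v : vect F) : vect F := Ymode [::] (qalpha 3) 0 v.
Definition raise3 (F : fieldType) (v : vect F) : vect F :=
  Ymode [::] (qalpha 2) 0 v ++ Ymode [::] (qalpha 4) 0 v.
Definition raise4 (F : fieldType) (v : vect F) : vect F :=
  Ymode [::] (qalpha 0) 0 v ++ Ymode [::] (qalpha 5) 0 v.
Definition raise0 (F : fieldType) (v : vect F) : vect F := Ymode [::] (qopp theta) 1 v.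

Definition gamma1 : qcoord := mkq [:: 1; 0; 0; 0; 0; -1].
Definition gamma2 : qcoord := mkq [:: 0; 0; 1; 0; -1; 0].
Definition gamma3 : qcoord := mkq [:: 1; 0; 1; 0; -1; -1].
Definition qzero : qcoord := fun _ => 0.
Definition omega_descr (F : fieldType) : seq (descr F) :=
  let ha := hlam F [:: -1; 0; 0; 0; 0; 1] in
  let hb := hlam F [:: 0; 0; 1; 0; -1; 0] in
  let hc := hlam F [:: 1; 0; -1; 0; 1; -1] in
  let c10 : F := 10%:R^-1 in let c5 : F := 5%:R^-1 in
  [:: (c10, [:: ha; ha], qzero); (c10, [:: hb; hb], qzero); (c10, [:: hc; hc], qzero);
      (- c5, [::], gamma1); (- c5, [::], qopp gamma1);
      (- c5, [::], gamma2); (- c5, [::], qopp gamma2);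
      (c5, [::], gamma3); (c5, [::], qopp gamma3)].

(* L(n) = {omega}_{n+1} *)
Definition Lvir (F : fieldType) (n : int) (v : vect F) : vect F :=
  Ymode_lin (omega_descr F) (n + 1) v.

(* tau on lambda-coordinates: lambda_1<->lambda_6, lambda_3<->lambda_5 *)
Definition tau_idx (i : 'I_6) : 'I_6 := nth i [:: nth i ords6 5; nth i ords6 1; nth i ords6 4;
  nth i ords6 3; nth i ords6 2; nth i ords6 0] i.
Definition Proj (F : fieldType) (nu : lat) : 'I_6 -> F :=
  fun i => ((latc nu i)%:~R + (latc nu (tau_idx i))%:~R) / 2%:R.
Definition omega4 (F : fieldType) : 'I_6 -> F :=
  fun i => if ((i : nat) == 0%N) || ((i : nat) == 5%N) then 2%:R^-1 else 0.

Definition is_hwv (F : fieldType) (v : vect F) (h : F) (om : 'I_6 -> F) : Prop :=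
  [/\ (exists b, coef v b != 0),
      vzero (raise0 v) (* HW1 *),
      [/\ vzero (raise1 v), vzero (raise2 v), vzero (raise3 v) & vzero (raise4 v)] (* HW2 *),
      (vzero (Lvir 1 v) /\ vzero (Lvir 2 v)) (* HW3 *)
      /\ (forall b, coef (Lvir 0 v) b = h * coef v b) (* HW4 *)
    & forall b, coef v b != 0 -> forall i, Proj F b.2 i = om i].

Definition mu : qcoord := mkq [:: 1; 1; 2; 2; 1; 1].
Definition taumu : qcoord := mkq [:: 1; 1; 1; 2; 2; 1].
Definition Pvec (F : fieldType) : vect F :=
  let h : hvec F := hroot F (mkq [:: -2; 0; -1; 0; 1; 2]) in
  heis_cre h 1 ([::], latA mu) ++ heis_cre (hopp h) 1 ([::], latA taumu) ++
  [:: (3%:R, ([::], latA (mkq [:: 2; 1; 2; 2; 1; 0])));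
      (3%:R, ([::], latA (mkq [:: 0; 1; 1; 2; 2; 2])))].

(* Main.v *)
Require Import Defs.
From mathcomp Require Import all_boot all_order all_algebra algC.
From Stdlib Require Import FunctionalExtensionality.
Import GRing.Theory.
Set Implicit Arguments. Unset Strict Implicit.
Local Open Scope ring_scope.

Definition mb (x y : basis) : bool := perm_eq x.1 y.1 && (x.2 == y.2).

Lemma mb_sym x y : mb x y = mb y x.
Proof. by rewrite /mb perm_sym eq_sym. Qed.

Lemma mb_trans x y z : mb x y -> mb y z -> mb x z.
Proof.
rewrite /mb => /andP[p1 /eqP e1] /andP[p2 /eqP e2].
by rewrite (perm_trans p1 p2) e1 e2 eqxx.
Qed.

Definition csum (F : fieldType) (v : vect F) : F := foldr (fun t acc => t.1 + acc) 0 v.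

Fixpoint chk_fuel (F : fieldType) (n : nat) (v : vect F) {struct n} : bool :=
  match n, v with
  | _, [::] => true
  | n'.+1, t :: r =>
      (t.1 + csum [seq u <- r | mb u.2 t.2] == 0) &&
      chk_fuel n' [seq u <- r | ~~ mb u.2 t.2]
  | 0%N, _ :: _ => false
  end.
Definition chk (F : fieldType) (v : vect F) := chk_fuel (size v) v.

Lemma coef_cons (F : fieldType) t (v : vect F) b :
  coef (t :: v) b = (if mb t.2 b then t.1 else 0) + coef v b.
Proof. by []. Qed.

Lemma coef_cat (F : fieldType) (v w : vect F) b : coef (v ++ w) b = coef v b + coef w b.
Proof. by elim: v => [|t v IH] /=; rewrite ?add0r // IH addrA. Qed.

Lemma coef_split (F : fieldType) (p : pred basis) (v : vect F) b :
  coef v b = coef [seq u <- v | p u.2] b + coef [seq u <- v | ~~ p u.2] b.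
Proof.
elim: v => [|t v IH]; first by rewrite /= addr0.
rewrite coef_cons IH /=; case: (p t.2) => /=; rewrite -/(mb t.2 b);
  [by rewrite addrA | by rewrite addrCA].
Qed.

Lemma coef_all_match (F : fieldType) (v : vect F) t b :
  all (fun u => mb u.2 t) v -> coef v b = if mb t b then csum v else 0.
Proof.
elim: v => [|u v IH]; first by case: ifP.
move=> /andP[hu hv]; rewrite coef_cons IH //.
have E : mb u.2 b = mb t b.
  apply/idP/idP => H; first by apply: mb_trans H; rewrite mb_sym.
  exact: mb_trans hu H.
by rewrite E; case: (mb t b); rewrite ?addr0.
Qed.

Lemma chk_fuel_ok (F : fieldType) n (v : vect F) : (size v <= n)%N -> chk_fuel n v -> vzero v.
Proof.
elim: n v => [|n IH] [|t r] //=; try by move=> _ _ b.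
move=> hs /andP[/eqP hsum hrest] b.
rewrite coef_cons (coef_split (fun x => mb x t.2)) (IH _ _ hrest) ?addr0.
- rewrite (@coef_all_match _ _ t.2); last by apply/allP=> u; rewrite mem_filter => /andP[].
  case: ifP => H; last by rewrite addr0.
  exact: hsum.
- rewrite size_filter; apply: leq_trans (count_size _ _) _; by [].
Qed.

Lemma chk_ok (F : fieldType) (v : vect F) : chk v -> vzero v.
Proof. exact: chk_fuel_ok. Qed.

Definition f : rat -> algC := ratr.
Definition mv (v : vect rat) : vect algC := [seq (f t.1, t.2) | t <- v].
Definition ms (s : lser rat) : lser algC := [seq (t.1, (f t.2.1, t.2.2)) | t <- s].
Definition mh (h : hvec rat) : hvec algC := fun i => f (h i).

Lemma coef_mv v b : coef (mv v) b = f (coef v b).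
Proof.
elim: v => [|t v IH] /=; first by rewrite /f rmorph0.
by rewrite IH /f rmorphD; case: ifP; rewrite ?rmorph0.
Qed.

Lemma mv_cat v w : mv (v ++ w) = mv v ++ mv w.
Proof. exact: map_cat. Qed.
Lemma ms_cat v w : ms (v ++ w) = ms v ++ ms w.
Proof. exact: map_cat. Qed.
Lemma mv_flatten L : mv (flatten L) = flatten (map mv L).
Proof. by elim: L => //= a L IH; rewrite mv_cat IH. Qed.
Lemma ms_flatten L : ms (flatten L) = flatten (map ms L).
Proof. by elim: L => //= a L IH; rewrite ms_cat IH. Qed.

Lemma pair_h_lat_m h beta : pair_h_lat (mh h) beta = f (pair_h_lat h beta).
Proof. by rewrite /pair_h_lat /sum6 /mh /f /= !rmorphD !rmorphM !rmorph_int rmorph0. Qed.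
Lemma pair_h_root_m h j : pair_h_root (mh h) j = f (pair_h_root h j).
Proof. by rewrite /pair_h_root /sum6 /mh /f /= !rmorphD !rmorphM !rmorph_int rmorph0. Qed.

Lemma heis_m h n b : heis (mh h) n b = mv (heis h n b).
Proof.
case: n => [[|k]|k] /=.
- by rewrite pair_h_lat_m.
- rewrite /heis_ann /mv -map_comp; apply: eq_map => k' /=.
  by rewrite pair_h_root_m /f rmorphM rmorph_nat.
- by [].
Qed.

Lemma vscale_m c v : vscale (f c) (mv v) = mv (vscale c v).
Proof. by rewrite /vscale /mv -!map_comp; apply: eq_map => t /=; rewrite /f rmorphM. Qed.

Lemma vbind_m g' g v : (forall b, g' b = mv (g b)) -> vbind g' (mv v) = mv (vbind g v).
Proof.
move=> Hg; elim: v => [|t v IH] //=.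
rewrite /vbind /= mv_cat -/(vbind g' (mv v)) -/(vbind g v) IH Hg; congr (_ ++ _).
by rewrite /mv -!map_comp; apply: eq_map => u /=; rewrite /f rmorphM.
Qed.

Lemma expcoef_m c' c A' A j b :
  (forall k, c' k = f (c k)) -> (forall k b, A' k b = mv (A k b)) ->
  expcoef c' A' j b = mv (expcoef c A j b).
Proof.
move=> Hc HA; rewrite /expcoef mv_flatten -map_comp; congr flatten; apply: eq_map => s /=.
have -> : foldr (fun k v => vbind (A' k) v) [:: (1, b)] s =
          mv (foldr (fun k v => vbind (A k) v) [:: (1, b)] s).
  elim: s => [|k s IH] /=; first by rewrite /mv /= /f rmorph1.
  by rewrite IH (vbind_m _ (HA k)).
rewrite -vscale_m; congr vscale.
rewrite /f rmorphM fmorphV rmorph_nat; congr (_ * _).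
elim: s => [|k s IH] /=; first by rewrite rmorph1.
by rewrite rmorphM IH Hc.
Qed.

Lemma vlift_m p v : vlift p (mv v) = ms (vlift p v).
Proof. by rewrite /vlift /mv /ms -!map_comp. Qed.

Lemma sbind_m g' g s : (forall p b, g' p b = ms (g p b)) -> sbind g' (ms s) = ms (sbind g s).
Proof.
move=> Hg; elim: s => [|t s IH] //=.
rewrite /sbind /= ms_cat -/(sbind g' (ms s)) -/(sbind g s) IH Hg; congr (_ ++ _).
by rewrite /ms -!map_comp; apply: eq_map => u /=; rewrite /f rmorphM.
Qed.

Lemma extract_m N s : extract N (ms s) = mv (extract N s).
Proof. by rewrite /extract /ms /mv filter_map -!map_comp. Qed.

Lemma hplus_m h p b : hplus (mh h) p b = ms (hplus h p b).
Proof.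
rewrite /hplus ms_flatten -map_comp; congr flatten; apply: eq_map => n.
by rewrite heis_m vlift_m.
Qed.
Lemma hminus_m N h p b : hminus N (mh h) p b = ms (hminus N h p b).
Proof.
rewrite /hminus ms_flatten -map_comp.
by congr flatten; apply: eq_map => n; rewrite heis_m vlift_m.
Qed.

Lemma eps_m x y : eps algC x y = f (eps rat x y).
Proof. by rewrite /eps /f; case: ifP; rewrite ?rmorphN1 ?rmorph1. Qed.

Lemma ealpha_m a p b : ealpha algC a p b = ms (ealpha rat a p b).
Proof. by rewrite /ealpha /ms /= eps_m. Qed.

Lemma hroot_m a : hroot algC a = mh (hroot rat a).
Proof. by apply: functional_extensionality => i; rewrite /mh /f /hroot rmorph_int. Qed.

Lemma Eplus_m a p b : Eplus algC a p b = ms (Eplus rat a p b).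
Proof.
rewrite /Eplus ms_flatten -map_comp; congr flatten; apply: eq_map => j /=.
rewrite -vlift_m; congr vlift; apply: expcoef_m.
- by move=> k; rewrite /f rmorphN fmorphV rmorph_nat.
- by move=> k b'; rewrite hroot_m heis_m.
Qed.
Lemma Eminus_m N a p b : Eminus algC N a p b = ms (Eminus rat N a p b).
Proof.
rewrite /Eminus ms_flatten -map_comp; congr flatten; apply: eq_map => j /=.
rewrite -vlift_m; congr vlift; apply: expcoef_m.
- by move=> k; rewrite /f fmorphV rmorph_nat.
- by move=> k b'; rewrite hroot_m heis_m.
Qed.

Lemma NO_m N hs a s : NO N (map mh hs) a (ms s) = ms (NO N hs a s).
Proof.
elim: hs s => [|h hs IH] s /=.
- rewrite (sbind_m _ (ealpha_m a)) (sbind_m _ (Eplus_m a)).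
  exact: (sbind_m _ (Eminus_m N a)).
- rewrite ms_cat (sbind_m _ (hplus_m h)) IH IH.
  by rewrite (sbind_m _ (hminus_m N h)).
Qed.

Lemma Ymode_m hs a m v : Ymode (map mh hs) a m (mv v) = mv (Ymode hs a m v).
Proof. by rewrite /Ymode vlift_m NO_m extract_m. Qed.

Definition md (d : descr rat) : descr algC := (f d.1.1, map mh d.1.2, d.2).

Lemma Ymode_lin_m w m v : Ymode_lin (map md w) m (mv v) = mv (Ymode_lin w m v).
Proof.
rewrite /Ymode_lin mv_flatten -!map_comp; congr flatten; apply: eq_map => d /=.
by rewrite Ymode_m vscale_m.
Qed.

Lemma hlam_m c : hlam algC c = mh (hlam rat c).
Proof.
apply: functional_extensionality => i.
by rewrite /hlam /mh /f /sum6 /= !rmorphD !rmorphM !rmorph_int fmorphV rmorph_nat rmorph0.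
Qed.

Lemma omega_m : omega_descr algC = map md (omega_descr rat).
Proof.
rewrite /omega_descr /md /= !hlam_m /f !rmorphN !fmorphV !rmorph_nat.
by [].
Qed.

Lemma Lvir_m n v : Lvir n (mv v) = mv (Lvir n v).
Proof. by rewrite /Lvir omega_m Ymode_lin_m. Qed.

Lemma raise_m0 a m v : Ymode (F:=algC) [::] a m (mv v) = mv (Ymode [::] a m v).
Proof. exact: (Ymode_m [::]). Qed.

Lemma Pvec_m : Pvec algC = mv (Pvec rat).
Proof.
rewrite /Pvec !mv_cat hroot_m.
have Hc : forall h b, heis_cre (mh h) 1 b = mv (heis_cre h 1 b).
  by move=> h b; rewrite /heis_cre /mv -map_comp.
have Ho : forall h, hopp (mh h) = mh (hopp h).
  by move=> h; apply: functional_extensionality => i; rewrite /hopp /mh /f rmorphN.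
rewrite Ho !Hc; congr (_ ++ (_ ++ _)); by rewrite /mv /= /f rmorph_nat.
Qed.

Lemma vzero_m v : vzero v -> vzero (mv v).
Proof. by move=> H b; rewrite coef_mv H /f rmorph0. Qed.

Lemma coef_vscale (F : fieldType) (c : F) (v : vect F) b : coef (vscale c v) b = c * coef v b.
Proof.
elim: v => [|t v IH]; first by rewrite /= mulr0.
move: IH; rewrite /vscale /= => ->; rewrite mulrDr.
by case: ifP; rewrite ?mulr0.
Qed.

Lemma coef_nz_has (F : fieldType) (v : vect F) b :
  coef v b != 0 -> has (fun t => t.2.2 == b.2) v.
Proof.
elim: v => [|t v IH]; first by rewrite /= eqxx.
rewrite coef_cons /= /mb; case: (t.2.2 == b.2); rewrite ?andbF ?orbT //= add0r.
exact: IH.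
Qed.

Lemma mem_ords6 (i : 'I_6) : i \in ords6.
Proof.
by case: i => [[|[|[|[|[|[|m]]]]]] Hi] //; rewrite /ords6 !inE -?val_eqE.
Qed.

Lemma Proj_m nu i : Proj algC nu i = f (Proj rat nu i).
Proof. by rewrite /Proj /f rmorphM fmorphV rmorphD !rmorph_int rmorph_nat. Qed.
Lemma omega4_m i : omega4 algC i = f (omega4 rat i).
Proof. by rewrite /omega4 /f; case: ifP; rewrite ?fmorphV ?rmorph_nat ?rmorph0. Qed.

Definition Pr := Pvec rat.

Lemma projcheck : all (fun t => all (fun i => Proj rat t.2.2 i == omega4 rat i) ords6) Pr.
Proof. by vm_compute. Qed.

Lemma hw4check : chk (Lvir 0 Pr ++ vscale (-(7%:R / 5%:R)) Pr).
Proof. by vm_compute. Qed.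

Theorem lemma6p3 : is_hwv (Pvec algC) (7%:R / 5%:R) (omega4 algC).
Proof.
rewrite Pvec_m -/Pr; split.
- exists ([::], latA (mkq [:: 2; 1; 2; 2; 1; 0])).
  by rewrite coef_mv /f fmorph_eq0; vm_compute.
- by rewrite /raise0 raise_m0; apply: vzero_m; apply: chk_ok; vm_compute.
- split.
  + by rewrite /raise1 raise_m0; apply: vzero_m; apply: chk_ok; vm_compute.
  + by rewrite /raise2 raise_m0; apply: vzero_m; apply: chk_ok; vm_compute.
  + by rewrite /raise3 !raise_m0 -mv_cat; apply: vzero_m; apply: chk_ok; vm_compute.
  + by rewrite /raise4 !raise_m0 -mv_cat; apply: vzero_m; apply: chk_ok; vm_compute.
- split; first split.
  + by rewrite Lvir_m; apply: vzero_m; apply: chk_ok; vm_compute.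
  + by rewrite Lvir_m; apply: vzero_m; apply: chk_ok; vm_compute.
  + move=> b; rewrite Lvir_m !coef_mv.
    have := chk_ok hw4check b; rewrite coef_cat coef_vscale mulNr => /eqP.
    rewrite addr_eq0 opprK => /eqP ->.
    by rewrite /f !rmorphM fmorphV !rmorph_nat.
- move=> b; rewrite coef_mv /f fmorph_eq0 => /coef_nz_has /hasP [t tin /eqP tb] i.
  rewrite Proj_m omega4_m -tb.
  have := allP projcheck t tin => /allP /(_ i (mem_ords6 i)) /eqP ->.
  by [].
Qed.
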